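(* Let $G$ be a finitely generated group and let $E$ be a finite right zero semigroup. Then $|\Omega(G\times E)|=|\Omega G|$.
   Context: A right zero semigroup is a semigroup $E$ with $ef=f$ for all $e,f\in E$; $G\times E$ is the direct product semigroup. A digraph on $\Omega$ is a subset $\Gamma\subseteq\Omega\times\Omega$. A path is a sequence of pairwise distinct vertices $(v_0,v_1,\ldots)$ with $(v_i,v_{i+1})\in\Gamma$ (length 0 allowed); a ray is an infinite path; an anti-ray is an infinite sequence of distinct vertices with $(v_{i+1},v_i)\in\Gamma$. For infinite $\Sigma',\Sigma\subseteq\Omega$, $\Sigma'\preccurlyeq\Sigma$ means there are infinitely many pairwise vertex-disjoint paths from vertices of $\Sigma'$ to vertices of $\Sigma$. On rays and anti-rays $\preccurlyeq$ is a preorder with associated equivalence $\approx$; the ends are the $\approx$-classes of rays and anti-rays, and $\Omega\Gamma$ denotes the poset of ends. The right Cayley graph $\Gamma_r(S,A)$ has vertex set $S$ and edges $(x,xa)$, $x\in S$, $a\in A$. For a finitely generated semigroup $S$ (in particular a finitely generated group regarded as a semigroup), $\Omega S:=\Omega\Gamma_r(S,A)$ for any finite semigroup generating set $A$ (well defined up to isomorphism). *)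

(* Defs.v *)
From Stdlib Require Import List.
Import ListNotations.

Definition digraph (V : Type) := V -> V -> Prop.

Definition is_path {V : Type} (Gam : digraph V) (p : list V) : Prop :=
  p <> [] /\ NoDup p /\
  (forall i x y, nth_error p i = Some x -> nth_error p (S i) = Some y -> Gam x y).

Definition path_from_to {V : Type} (Gam : digraph V) (Sig' Sig : V -> Prop)
  (p : list V) : Prop :=
  is_path Gam p /\
  (exists x q, p = x :: q /\ Sig' x /\ Sig (last q x)).

(* Sigma' ≼ Sigma : infinitely many pairwise vertex-disjoint paths from
   Sigma' to Sigma (an infinite family of such paths contains a countable one,
   so we ask for a sequence of them). *)
Definition preceq {V : Type} (Gam : digraph V) (Sig' Sig : V -> Prop) : Prop :=
  exists P : nat -> list V,
    (forall n, path_from_to Gam Sig' Sig (P n)) /\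
    (forall n m v, n <> m -> In v (P n) -> In v (P m) -> False).

Definition is_ray {V : Type} (Gam : digraph V) (r : nat -> V) : Prop :=
  (forall i j, r i = r j -> i = j) /\ (forall i, Gam (r i) (r (S i))).

Definition is_antiray {V : Type} (Gam : digraph V) (r : nat -> V) : Prop :=
  (forall i j, r i = r j -> i = j) /\ (forall i, Gam (r (S i)) (r i)).

Definition ray_or_antiray {V : Type} (Gam : digraph V) (r : nat -> V) : Prop :=
  is_ray Gam r \/ is_antiray Gam r.

Definition range {V : Type} (r : nat -> V) : V -> Prop := fun v => exists i, r i = v.

Definition end_equiv {V : Type} (Gam : digraph V) (r s : nat -> V) : Prop :=
  preceq Gam (range r) (range s) /\ preceq Gam (range s) (range r).

(* |Ω Gam1| = |Ω Gam2| : there is a bijection between the sets of ends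
   (≈-classes of rays and anti-rays), given by a map on representatives that
   respects and reflects ≈ and is surjective onto the classes. *)
Definition same_number_of_ends {V1 V2 : Type} (Gam1 : digraph V1) (Gam2 : digraph V2)
  : Prop :=
  exists f : (nat -> V1) -> (nat -> V2),
    (forall r, ray_or_antiray Gam1 r -> ray_or_antiray Gam2 (f r)) /\
    (forall r s, ray_or_antiray Gam1 r -> ray_or_antiray Gam1 s ->
       (end_equiv Gam1 r s <-> end_equiv Gam2 (f r) (f s))) /\
    (forall s, ray_or_antiray Gam2 s ->
       exists r, ray_or_antiray Gam1 r /\ end_equiv Gam2 (f r) s).

Definition right_cayley {S : Type} (mul : S -> S -> S) (A : list S) : digraph S :=
  fun x y => exists a, In a A /\ y = mul x a.

Definition sgp_generates {S : Type} (mul : S -> S -> S) (A : list S) : Prop :=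
  forall s, exists a l, In a A /\ Forall (fun b => In b A) l /\ s = fold_left mul l a.

Definition is_group {G : Type} (mul : G -> G -> G) (one : G) (inv : G -> G) : Prop :=
  (forall x y z, mul (mul x y) z = mul x (mul y z)) /\
  (forall x, mul one x = x) /\ (forall x, mul x one = x) /\
  (forall x, mul (inv x) x = one) /\ (forall x, mul x (inv x) = one).

Definition right_zero {E : Type} (mulE : E -> E -> E) : Prop :=
  forall e f, mulE e f = f.

Definition prod_mul {G E : Type} (mul : G -> G -> G) (mulE : E -> E -> E)
  : (G * E) -> (G * E) -> (G * E) :=
  fun x y => (mul (fst x) (fst y), mulE (snd x) (snd y)).

(* Main.v *)
Require Import Defs.
From Stdlib Require Import List Arith Lia.
From Stdlib Require Import Classical ClassicalEpsilon FinFun.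
Import ListNotations.
Import ListNotations.

Definition rev_g {V} (Gm : digraph V) : digraph V := fun x y => Gm y x.
Definition step {V} (Gm : digraph V) (x y : V) : Prop := x = y \/ Gm x y.

Inductive wk {V} (Gm : digraph V) : V -> V -> list V -> Prop :=
| wk1 : forall x, wk Gm x x [x]
| wkc : forall x y z l, step Gm x y -> wk Gm y z l -> wk Gm x z (x :: l).

Definition reach {V} (Gm : digraph V) (K : nat) (x y : V) : Prop :=
  exists l, wk Gm x y l /\ length l <= S K.
Definition swalk {V} (Gm : digraph V) (w : nat -> V) : Prop :=
  forall i, step Gm (w i) (w (S i)).
Definition fto {V} (w : nat -> V) : Prop :=
  forall v, exists N, forall n, w n = v -> n < N.
Definition indeg_fin {V} (Gm : digraph V) : Prop :=
  forall y, exists L, forall x, Gm x y -> In x L.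
Definition img {V1 V2} (h : V1 -> V2) (X : V1 -> Prop) : V2 -> Prop :=
  fun v => exists x, X x /\ h x = v.

Lemma fchoice {A B : Type} (P : A -> B -> Prop) :
  (forall a, exists b, P a b) -> exists f, forall a, P a (f a).
Proof.
  intros H. exists (fun a => proj1_sig (constructive_indefinite_description _ (H a))).
  intros a. exact (proj2_sig (constructive_indefinite_description _ (H a))).
Qed.

Lemma wk_hd {V} (Gm : digraph V) x y l : wk Gm x y l -> exists q, l = x :: q.
Proof. intros H; destruct H; eauto. Qed.

Lemma wk_app {V} (Gm : digraph V) x y z l1 l2 :
  wk Gm x y l1 -> wk Gm y z l2 -> wk Gm x z (l1 ++ tl l2).
Proof.
  intros H1; revert z l2; induction H1; intros z' l2 H2; simpl.
  - destruct (wk_hd _ _ _ _ H2) as [q ->]. exact H2.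
  - econstructor; eauto.
Qed.

Lemma In_tl {A} (v : A) l : In v (tl l) -> In v l.
Proof. destruct l; simpl; auto. Qed.

Lemma length_tl {A} (l : list A) : length (tl l) = length l - 1.
Proof. destruct l; simpl; lia. Qed.

Lemma wk_snoc {V} (Gm : digraph V) x y z l :
  wk Gm x y l -> step Gm y z -> wk Gm x z (l ++ [z]).
Proof.
  intros H Hs. replace [z] with (tl [y; z]) by reflexivity.
  eapply wk_app; eauto. econstructor; eauto. constructor.
Qed.

Lemma wk_rev {V} (Gm : digraph V) x y l : wk Gm x y l -> wk (rev_g Gm) y x (rev l).
Proof.
  induction 1; simpl.
  - constructor.
  - eapply wk_snoc; eauto. destruct H as [->|H]; [left; auto | right; exact H].
Qed.

Lemma reach_rev {V} (Gm : digraph V) K x y : reach Gm K x y -> reach (rev_g Gm) K y x.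
Proof. intros [l [H1 H2]]. exists (rev l); split; [apply wk_rev; auto | rewrite length_rev; auto]. Qed.

Lemma reach_mono {V} (Gm : digraph V) K K' x y : reach Gm K x y -> K <= K' -> reach Gm K' x y.
Proof. intros [l [H1 H2]] H; exists l; split; auto; lia. Qed.

Lemma reach_refl {V} (Gm : digraph V) K x : reach Gm K x x.
Proof. exists [x]; split; [constructor | simpl; lia]. Qed.

Lemma wk_rep {V} (Gm : digraph V) x k : wk Gm x x (x :: repeat x k).
Proof. induction k; simpl. constructor. econstructor; [left; reflexivity | exact IHk]. Qed.

Lemma wk_pad {V} (Gm : digraph V) x y l k : wk Gm x y l -> wk Gm x y (l ++ repeat y k).
Proof. induction 1; simpl. apply wk_rep. econstructor; eauto. Qed.

Lemma wk_prefix {V} (Gm : digraph V) x y l v :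
  wk Gm x y l -> In v l -> exists l', wk Gm x v l' /\ length l' <= length l.
Proof.
  intros H; induction H; simpl; intros Hv.
  - destruct Hv as [<-|[]]. exists [x]; split; [constructor | simpl; lia].
  - destruct Hv as [<-|Hv].
    + exists [x]; split; [constructor | simpl; lia].
    + destruct (IHwk Hv) as [l' [H1 H2]]. exists (x :: l'); split; [econstructor; eauto | simpl; lia].
Qed.

Lemma wk_suffix {V} (Gm : digraph V) x y l v :
  wk Gm x y l -> In v l -> exists l', wk Gm v y l' /\ length l' <= length l.
Proof.
  intros H; induction H; simpl; intros Hv.
  - destruct Hv as [<-|[]]. exists [x]; split; [constructor | simpl; lia].
  - destruct Hv as [<-|Hv].
    + exists (x :: l); split; [econstructor; eauto | simpl; lia].
    + destruct (IHwk Hv) as [l' [H1 H2]]. exists l'; split; auto; lia.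
Qed.

Lemma wk_nth0 {V} (Gm : digraph V) x y l d : wk Gm x y l -> nth 0 l d = x.
Proof. intros H; destruct H; reflexivity. Qed.

Lemma wk_nth_step {V} (Gm : digraph V) x y l d :
  wk Gm x y l -> forall j, S j < length l -> step Gm (nth j l d) (nth (S j) l d).
Proof.
  induction 1; intros j Hj; simpl in *.
  - lia.
  - destruct j.
    + rewrite (wk_nth0 _ _ _ _ d H0). exact H.
    + apply IHwk. lia.
Qed.

Lemma wk_nth_last {V} (Gm : digraph V) x y l d : wk Gm x y l -> nth (length l - 1) l d = y.
Proof.
  induction 1; simpl. reflexivity.
  destruct (wk_hd _ _ _ _ H0) as [q ->]. simpl in *. rewrite Nat.sub_0_r in IHwk. exact IHwk.
Qed.

Inductive chainP {V} (Gm : digraph V) : list V -> Prop :=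
| cp0 : chainP Gm []
| cp1 : forall x, chainP Gm [x]
| cp2 : forall x y l, Gm x y -> chainP Gm (y :: l) -> chainP Gm (x :: y :: l).

Lemma chainP_nth {V} (Gm : digraph V) l :
  chainP Gm l <-> (forall i x y, nth_error l i = Some x -> nth_error l (S i) = Some y -> Gm x y).
Proof.
  split.
  - induction 1; intros i a b H1 H2.
    + destruct i; discriminate.
    + destruct i; simpl in H2; [discriminate| destruct i; discriminate].
    + destruct i; simpl in *.
      * inversion H1; inversion H2; subst; auto.
      * eapply IHchainP; eauto.
  - induction l as [|a l IH]; intros H. constructor.
    destruct l as [|b l]. constructor. constructor.
    + apply (H 0); reflexivity.
    + apply IH. intros i x y H1 H2. apply (H (S i)); auto.
Qed.

Lemma is_path_iff {V} (Gm : digraph V) p : is_path Gm p <-> p <> [] /\ NoDup p /\ chainP Gm p.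
Proof.
  unfold is_path. rewrite chainP_nth. tauto.
Qed.

Lemma chainP_tl {V} (Gm : digraph V) a l : chainP Gm (a :: l) -> chainP Gm l.
Proof. intros H; inversion H; subst; [constructor | auto]. Qed.

Lemma chainP_app_r {V} (Gm : digraph V) l1 l2 : chainP Gm (l1 ++ l2) -> chainP Gm l2.
Proof. induction l1; simpl; auto. intros H; apply IHl1; eapply chainP_tl; eauto. Qed.

Lemma last_ne {A} (l : list A) d d' : l <> [] -> last l d = last l d'.
Proof.
  induction l as [|a l IH]; intros H. congruence.
  destruct l. reflexivity. simpl. apply IH. discriminate.
Qed.

Lemma last_cons_default {A} (a : A) q d : last (a :: q) d = last q a.
Proof. destruct q as [|b q]. reflexivity. exact (last_ne (b :: q) d a ltac:(discriminate)). Qed.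

Lemma last_app_cons {A} (l1 : list A) a l2 d : last (l1 ++ a :: l2) d = last (a :: l2) d.
Proof.
  induction l1 as [|b l1 IH]. reflexivity.
  rewrite <- IH. rewrite <- app_comm_cons. destruct (l1 ++ a :: l2) eqn:E. destruct l1; discriminate. reflexivity.
Qed.

Lemma last_in {A} (x : A) q : In (last q x) (x :: q).
Proof.
  revert x; induction q as [|a q IH]; intros x. left; reflexivity.
  right. rewrite last_cons_default. apply IH.
Qed.

Lemma shortcut {V} (Gm : digraph V) x y l :
  wk Gm x y l -> exists p, is_path Gm p /\ (exists q, p = x :: q /\ last q x = y) /\ incl p l.
Proof.
  induction 1 as [x|x y z l Hs Hw IH].
  - exists [x]. split. apply is_path_iff. repeat split. discriminate. repeat constructor. intros []. constructor.
    split. exists []; auto. apply incl_refl.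
  - destruct IH as [p [Hp [[q [Hpq Hl]] Hinc]]].
    apply is_path_iff in Hp. destruct Hp as [_ [Hnd Hch]].
    destruct (classic (In x p)) as [Hx|Hx].
    + destruct (in_split _ _ Hx) as [p1 [p2 Hsp]].
      exists (x :: p2). split; [|split].
      * apply is_path_iff. split. discriminate. split.
        -- rewrite Hsp in Hnd. eapply NoDup_app_remove_l; eauto.
        -- rewrite Hsp in Hch. eapply chainP_app_r; eauto.
      * exists p2. split; auto. rewrite <- Hl. rewrite <- (last_cons_default y q y).
        rewrite <- Hpq, Hsp, last_app_cons, last_cons_default. reflexivity.
      * intros v [<-|Hv]. left; auto. right. apply Hinc. rewrite Hsp. apply in_or_app. right; right; auto.
    + exists (x :: p). split; [|split].
      * apply is_path_iff. split. discriminate. split. constructor; auto.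
        subst p. constructor; auto. destruct Hs as [<-|Hs]; auto. exfalso; apply Hx; left; auto.
      * exists p. split; auto. subst p. rewrite last_cons_default. auto.
      * intros v [<-|Hv]. left; auto. right; auto.
Qed.

Lemma path_wk {V} (Gm : digraph V) x q : chainP Gm (x :: q) -> wk Gm x (last q x) (x :: q).
Proof.
  revert x; induction q as [|a q IH]; intros x H. constructor.
  inversion H; subst. rewrite last_cons_default.
  econstructor. right; eauto. apply IH; auto.
Qed.

Lemma path_from_to_wk {V} (Gm : digraph V) X Y p : path_from_to Gm X Y p ->
  exists x y, X x /\ Y y /\ wk Gm x y p.
Proof.
  intros [Hp [x [q [-> [HX HY]]]]]. apply is_path_iff in Hp. exists x, (last q x).
  repeat split; auto. apply path_wk; tauto.
Qed.

Fixpoint lsum (l : list nat) : nat := match l with [] => 0 | a :: l => a + lsum l end.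
Lemma lsum_in a l : In a l -> a <= lsum l.
Proof. induction l; simpl. intros []. intros [->|H]. lia. specialize (IHl H); lia. Qed.

Fixpoint sg (Bf : nat -> nat) (k : nat) : nat * nat :=
  match k with
  | 0 => (0, Bf 0)
  | S k' => let vb := sg Bf k' in (S (fst vb + snd vb), snd vb + Bf (S (fst vb + snd vb)))
  end.

Lemma sg_snd_mono Bf j k : j <= k -> snd (sg Bf j) <= snd (sg Bf k).
Proof. induction 1; simpl; lia. Qed.
Lemma sg_B Bf k : Bf (fst (sg Bf k)) <= snd (sg Bf k).
Proof. destruct k; simpl; lia. Qed.
Lemma sg_S Bf k : snd (sg Bf k) < fst (sg Bf (S k)).
Proof. simpl; lia. Qed.

Lemma extract {V} (Gm : digraph V) (X Y : V -> Prop) (W : nat -> list V) :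
  (forall n, exists x y, X x /\ Y y /\ wk Gm x y (W n)) ->
  (forall v, exists N, forall n, In v (W n) -> n < N) ->
  preceq Gm X Y.
Proof.
  intros HW Hfin.
  assert (Hp : forall n, exists p, path_from_to Gm X Y p /\ incl p (W n)).
  { intros n. destruct (HW n) as [x [y [Hx [Hy Hw]]]].
    destruct (shortcut _ _ _ _ Hw) as [p [Hp [[q [Hpq Hl]] Hinc]]].
    exists p. split; auto. split; auto. exists x, q. subst; auto. }
  apply fchoice in Hp. destruct Hp as [p Hp].
  apply fchoice in Hfin. destruct Hfin as [Nf HNf].
  set (Bf := fun n => lsum (map Nf (p n))).
  assert (HB : forall v n, In v (p n) -> Nf v <= Bf n).
  { intros v n Hv. apply lsum_in. apply in_map; auto. }
  assert (HN : forall v n, In v (p n) -> n < Nf v).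
  { intros v n Hv. apply HNf. apply (proj2 (Hp n)); auto. }
  exists (fun k => p (fst (sg Bf k))). split.
  - intros n; apply Hp.
  - assert (Hlt : forall j k v, j < k -> In v (p (fst (sg Bf j))) -> In v (p (fst (sg Bf k))) -> False).
    { intros j k v Hjk H1 H2. destruct k as [|k]. lia.
      pose proof (HB _ _ H1). pose proof (HN _ _ H2). pose proof (sg_B Bf j).
      pose proof (sg_S Bf k). pose proof (sg_snd_mono Bf j k ltac:(lia)). lia. }
    intros n m v Hnm H1 H2. destruct (Nat.lt_total n m) as [H|[H|H]].
    + eapply Hlt; eauto.
    + contradiction.
    + eapply Hlt; eauto.
Qed.

Lemma bound_list {V} (R : V -> nat -> Prop) :
  (forall v, exists N, forall n, R v n -> n < N) ->
  forall L, exists N, forall v n, In v L -> R v n -> n < N.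
Proof.
  intros H L; induction L as [|a L IH]. exists 0; intros v n [].
  destruct (H a) as [N1 H1]. destruct IH as [N2 H2]. exists (N1 + N2).
  intros v n [<-|Hv] Hr. specialize (H1 _ Hr); lia. specialize (H2 _ _ Hv Hr); lia.
Qed.

Lemma fto_list {V} (c : nat -> V) : fto c -> forall L, exists N, forall n, In (c n) L -> n < N.
Proof.
  intros H L. destruct (bound_list (fun v n => c n = v) H L) as [N HN].
  exists N. intros n Hn. eapply HN; eauto.
Qed.

Lemma inj_fto {V} (c : nat -> V) : (forall i j, c i = c j -> i = j) -> fto c.
Proof.
  intros H v. destruct (classic (exists n0, c n0 = v)) as [[n0 H0]|H0].
  - exists (S n0). intros n Hn. assert (n = n0) by (apply H; congruence). lia.
  - exists 0. intros n Hn. exfalso; apply H0; eauto.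
Qed.

Definition disj {V} (P : nat -> list V) := forall n m v, n <> m -> In v (P n) -> In v (P m) -> False.

Lemma uniq_bound {V} (P : nat -> list V) : disj P ->
  forall v (g : nat -> nat), exists N, forall a, In v (P a) -> g a < N.
Proof.
  intros H v g. destruct (classic (exists a0, In v (P a0))) as [[a0 H0]|H0].
  - exists (S (g a0)). intros a Ha. destruct (Nat.eq_dec a a0) as [->|Hne]. lia.
    exfalso; eapply H; eauto.
  - exists 0. intros a Ha. exfalso; eauto.
Qed.

Lemma inf_int {V} (Gm : digraph V) (X Y : V -> Prop) (s : nat -> V) :
  (forall i j, s i = s j -> i = j) -> (forall n, X (s n) /\ Y (s n)) -> preceq Gm X Y.
Proof.
  intros Hinj H. exists (fun n => [s n]). split.
  - intros n. split. apply is_path_iff. split; [discriminate|split; [constructor; [intros []|constructor] | constructor]].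
    exists (s n), []. split; [reflexivity| split; apply H].
  - intros n m v Hnm [<-|[]] [E|[]]. apply Hnm, Hinj; auto.
Qed.

Lemma prec_mono {V} (Gm : digraph V) (X X' Y Y' : V -> Prop) :
  (forall v, X v -> X' v) -> (forall v, Y v -> Y' v) -> preceq Gm X Y -> preceq Gm X' Y'.
Proof.
  intros HX HY [P [HP HD]]. exists P. split; auto.
  intros n. destruct (HP n) as [Hp [x [q [E [H1 H2]]]]]. split; auto. exists x, q; auto.
Qed.

Lemma prec_rev {V} (Gm : digraph V) X Y : preceq Gm X Y -> preceq (rev_g Gm) Y X.
Proof.
  intros [P [HP HD]]. apply (extract _ _ _ (fun n => rev (P n))).
  - intros n. destruct (path_from_to_wk _ _ _ _ (HP n)) as [x [y [Hx [Hy Hw]]]].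
    exists y, x. repeat split; auto. apply wk_rev; auto.
  - intros v. destruct (uniq_bound P HD v (fun a => a)) as [N HN]. exists N.
    intros n Hn. apply HN. apply in_rev; auto.
Qed.

Lemma preds_list {V} (Gm : digraph V) : indeg_fin Gm ->
  forall L, exists L', forall y x, In y L -> Gm x y -> In x L'.
Proof.
  intros H L; induction L as [|a L IH]. exists []; intros y x [].
  destruct (H a) as [L1 H1]. destruct IH as [L2 H2]. exists (L1 ++ L2).
  intros y x [<-|Hy] Hg; apply in_or_app; eauto.
Qed.

Lemma ball_fin {V} (Gm : digraph V) : indeg_fin Gm ->
  forall K v, exists L, forall x, reach Gm K x v -> In x L.
Proof.
  intros Hf K v. induction K as [|K IH].
  - exists [v]. intros x [l [Hw Hl]]. inversion Hw; subst. left; auto.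
    destruct (wk_hd _ _ _ _ H0) as [q ->]. simpl in Hl; lia.
  - destruct IH as [L HL]. destruct (preds_list Gm Hf L) as [L' HL'].
    exists (v :: L ++ L'). intros x [l [Hw Hl]]. inversion Hw; subst. left; auto.
    right. apply in_or_app.
    assert (Hy : In y L) by (apply HL; exists l0; split; auto; simpl in Hl; lia).
    destruct H as [<-|H]; [left; auto | right; eauto].
Qed.

Lemma close_prec {V} (Gm : digraph V) K (c : nat -> V) (X Y : V -> Prop) :
  indeg_fin Gm -> fto c ->
  (forall n, X (c n) /\ exists y, Y y /\ reach Gm K (c n) y) -> preceq Gm X Y.
Proof.
  intros Hf Hc H.
  assert (H' : forall n, exists l, exists y, Y y /\ wk Gm (c n) y l /\ length l <= S K).
  { intros n. destruct (H n) as [_ [y [Hy [l [Hw Hl]]]]]. eauto. }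
  apply fchoice in H'. destruct H' as [W HW].
  apply (extract _ _ _ W).
  - intros n. destruct (HW n) as [y [Hy [Hw _]]]. exists (c n), y. repeat split; auto. apply H.
  - intros v. destruct (ball_fin Gm Hf K v) as [L HL]. destruct (fto_list c Hc L) as [N HN].
    exists N. intros n Hv. apply HN, HL. destruct (HW n) as [y [_ [Hw Hl]]].
    destruct (wk_prefix _ _ _ _ _ Hw Hv) as [l' [H1 H2]]. exists l'; split; auto; lia.
Qed.

Lemma map_walk {V1 V2} (G1 : digraph V1) (G2 : digraph V2) (h : V1 -> V2) K :
  (forall x y, G1 x y -> reach G2 K (h x) (h y)) ->
  forall q x, chainP G1 (x :: q) -> exists l, wk G2 (h x) (h (last q x)) l /\
    forall v, In v l -> exists z, In z (x :: q) /\ reach G2 K (h z) v.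
Proof.
  intros He q. induction q as [|a q IH]; intros x Hc.
  - exists [h x]. split. constructor. intros v [<-|[]]. exists x; split; [left; auto | apply reach_refl].
  - inversion Hc; subst. destruct (He _ _ H1) as [l1 [Hw1 Hl1]].
    destruct (IH a H3) as [l2 [Hw2 Hv2]]. exists (l1 ++ tl l2). split.
    + rewrite last_cons_default. eapply wk_app; eauto.
    + intros v Hv. apply in_app_or in Hv. destruct Hv as [Hv|Hv].
      * exists x. split. left; auto. destruct (wk_prefix _ _ _ _ _ Hw1 Hv) as [l' [H1' H2']].
        exists l'; split; auto; lia.
      * apply In_tl in Hv. destruct (Hv2 v Hv) as [z [Hz Hr]]. exists z; split; auto. right; auto.
Qed.

Lemma fibers_list {V1 V2} (h : V1 -> V2) :
  (forall y, exists L, forall x, h x = y -> In x L) ->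
  forall L, exists L', forall x, In (h x) L -> In x L'.
Proof.
  intros H L; induction L as [|a L IH]. exists []; intros x [].
  destruct (H a) as [L1 H1]. destruct IH as [L2 H2]. exists (L1 ++ L2).
  intros x [E|Hx]; apply in_or_app; [left; apply H1; auto | right; auto].
Qed.

Lemma transport {V1 V2} (G1 : digraph V1) (G2 : digraph V2) (h : V1 -> V2) K X Y :
  indeg_fin G2 -> (forall y, exists L, forall x, h x = y -> In x L) ->
  (forall x y, G1 x y -> reach G2 K (h x) (h y)) ->
  preceq G1 X Y -> preceq G2 (img h X) (img h Y).
Proof.
  intros Hf Hfib He [P [HP HD]].
  assert (H : forall n, exists l, exists x q, P n = x :: q /\ X x /\ Y (last q x) /\
     wk G2 (h x) (h (last q x)) l /\
     forall v, In v l -> exists z, In z (P n) /\ reach G2 K (h z) v).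
  { intros n. destruct (HP n) as [Hp [x [q [E [HX HY]]]]].
    apply is_path_iff in Hp. destruct Hp as [_ [_ Hc]]. rewrite E in Hc.
    destruct (map_walk G1 G2 h K He q x Hc) as [l [Hw Hv]]. exists l, x, q.
    repeat split; auto. rewrite E; auto. }
  apply fchoice in H. destruct H as [W HW].
  apply (extract _ _ _ W).
  - intros n. destruct (HW n) as [x [q [_ [HX [HY [Hw _]]]]]].
    exists (h x), (h (last q x)). repeat split; auto; eexists; split; eauto.
  - intros v. destruct (ball_fin G2 Hf K v) as [L HL].
    destruct (fibers_list h Hfib L) as [L' HL'].
    destruct (bound_list (fun z n => In z (P n))
       (fun z => uniq_bound P HD z (fun a => a)) L') as [N HN].
    exists N. intros n Hv. destruct (HW n) as [x [q [_ [_ [_ [_ Hz]]]]]].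
    destruct (Hz v Hv) as [z [Hzn Hr]]. eapply HN; eauto.
Qed.

Lemma inj_unbounded (f : nat -> nat) : (forall a b, f a = f b -> a = b) -> forall n, exists a, n <= f a.
Proof.
  intros Hinj n. apply NNPP. intros Hc.
  assert (Hlt : forall a, f a < n).
  { intros a. destruct (Nat.lt_ge_cases (f a) n); auto. exfalso; apply Hc; eauto. }
  assert (Hnd : NoDup (map f (seq 0 (S n)))).
  { apply Injective_map_NoDup. intros a b; apply Hinj. apply seq_NoDup. }
  assert (Hinc : incl (map f (seq 0 (S n))) (seq 0 n)).
  { intros y Hy. apply in_map_iff in Hy. destruct Hy as [a [<- _]]. apply in_seq. specialize (Hlt a); lia. }
  pose proof (NoDup_incl_length Hnd Hinc). rewrite length_map, !length_seq in H. lia.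
Qed.

Lemma seg_walk {V} (Gm : digraph V) w : swalk Gm w ->
  forall k i, wk Gm (w i) (w (i + k)) (map w (seq i (S k))).
Proof.
  intros Hs k. induction k as [|k IH]; intros i.
  - rewrite Nat.add_0_r. constructor.
  - replace (i + S k) with (S i + k) by lia. simpl. econstructor. apply Hs.
    apply (IH (S i)).
Qed.

Lemma trans_fw {V} (Gm : digraph V) (w : nat -> V) X Y :
  swalk Gm w -> fto w -> preceq Gm X (range w) -> preceq Gm (range w) Y -> preceq Gm X Y.
Proof.
  intros Hs Hf [P [HP HPD]] [Q [HQ HQD]].
  assert (Ha : forall a, exists i, exists x q, P a = x :: q /\ X x /\ w i = last q x /\ chainP Gm (x :: q)).
  { intros a. destruct (HP a) as [Hp [x [q [E [HX [i Hi]]]]]]. apply is_path_iff in Hp.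
    destruct Hp as [_ [_ Hc]]. rewrite E in Hc. exists i, x, q. repeat split; auto. }
  apply fchoice in Ha. destruct Ha as [al Hal].
  assert (Hb : forall b, exists i, exists y q, Q b = y :: q /\ Y (last q y) /\ w i = y /\ chainP Gm (y :: q)).
  { intros b. destruct (HQ b) as [Hp [y [q [E [[i Hi] HY]]]]]. apply is_path_iff in Hp.
    destruct Hp as [_ [_ Hc]]. rewrite E in Hc. exists i, y, q. repeat split; auto. }
  apply fchoice in Hb. destruct Hb as [be Hbe].
  assert (Hinja : forall a b, al a = al b -> a = b).
  { intros a b E. apply NNPP; intros Hne.
    destruct (Hal a) as [x [q [E1 [_ [E2 _]]]]]. destruct (Hal b) as [x' [q' [E1' [_ [E2' _]]]]].
    apply (HPD a b (last q x) Hne). rewrite E1; apply last_in.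
    rewrite <- E2, E, E2', E1'. apply last_in. }
  assert (Hinjb : forall a b, be a = be b -> a = b).
  { intros a b E. apply NNPP; intros Hne.
    destruct (Hbe a) as [x [q [E1 [_ [E2 _]]]]]. destruct (Hbe b) as [x' [q' [E1' [_ [E2' _]]]]].
    apply (HQD a b x Hne). rewrite E1; left; auto.
    rewrite <- E2, E, E2', E1'. left; auto. }
  assert (Hch : forall n, exists ab, n <= al (fst ab) /\ al (fst ab) <= be (snd ab)).
  { intros n. destruct (inj_unbounded al Hinja n) as [a Ha].
    destruct (inj_unbounded be Hinjb (al a)) as [b Hb]. exists (a, b); simpl; auto. }
  apply fchoice in Hch. destruct Hch as [ab Hab].
  set (Wl := fun n => P (fst (ab n)) ++ tl (map w (seq (al (fst (ab n))) (S (be (snd (ab n)) - al (fst (ab n))))) ++ tl (Q (snd (ab n))))).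
  apply (extract _ _ _ Wl).
  - intros n. destruct (Hal (fst (ab n))) as [x [q [E1 [HX [E2 Hc1]]]]].
    destruct (Hbe (snd (ab n))) as [y [q' [E1' [HY [E2' Hc2]]]]].
    exists x, (last q' y). repeat split; auto. unfold Wl. rewrite E1.
    eapply wk_app. apply path_wk; eauto. rewrite <- E2.
    eapply wk_app. apply seg_walk; auto.
    destruct (Hab n) as [_ Hle]. replace (al (fst (ab n)) + (be (snd (ab n)) - al (fst (ab n)))) with (be (snd (ab n))) by lia.
    rewrite E2', E1'. apply path_wk; auto.
  - intros v. destruct (uniq_bound P HPD v al) as [N1 H1].
    destruct (uniq_bound Q HQD v be) as [N2 H2]. destruct (Hf v) as [N3 H3].
    exists (N1 + N2 + N3). intros n Hv. unfold Wl in Hv. destruct (Hab n) as [Hn Hle].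
    apply in_app_or in Hv. destruct Hv as [Hv|Hv].
    + specialize (H1 _ Hv); lia.
    + apply In_tl, in_app_or in Hv. destruct Hv as [Hv|Hv].
      * apply in_map_iff in Hv. destruct Hv as [j [Ej Hj]]. apply in_seq in Hj.
        specialize (H3 _ Ej); lia.
      * apply In_tl in Hv. specialize (H2 _ Hv); lia.
Qed.

Lemma trans_gen {V} (Gm : digraph V) (w : nat -> V) X Y :
  (swalk Gm w \/ swalk (rev_g Gm) w) -> fto w ->
  preceq Gm X (range w) -> preceq Gm (range w) Y -> preceq Gm X Y.
Proof.
  intros [Hs|Hs] Hf H1 H2. eapply trans_fw; eauto.
  apply prec_rev in H1. apply prec_rev in H2.
  pose proof (trans_fw _ w _ _ Hs Hf H2 H1) as H. apply prec_rev in H. exact H.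
Qed.

Lemma dm M n q r : r < M -> n = M * q + r -> n / M = q /\ n mod M = r.
Proof.
  intros H1 H2. split; symmetry. apply (Nat.div_unique _ _ _ r); lia. apply (Nat.mod_unique _ _ q); lia.
Qed.

Lemma flatten {V} (Gm : digraph V) K (c : nat -> V) :
  indeg_fin Gm -> fto c -> (forall i, reach Gm K (c i) (c (S i))) ->
  exists u, swalk Gm u /\ fto u /\ (forall i, exists n, u n = c i) /\
    (forall n, exists i, reach Gm K (c i) (u n) /\ reach Gm K (u n) (c (S i))).
Proof.
  intros Hf Hc Hr. apply fchoice in Hr. destruct Hr as [pc Hpc].
  pose (M := S K).
  pose (p := fun i => pc i ++ repeat (c (S i)) (M - length (pc i))).
  assert (Hp : forall i, wk Gm (c i) (c (S i)) (p i) /\ length (p i) = M).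
  { intros i. destruct (Hpc i) as [Hw Hl]. split. apply wk_pad; auto.
    unfold p. rewrite length_app, repeat_length. unfold M in *. lia. }
  pose (u := fun n => nth (n mod M) (p (n / M)) (c 0)).
  assert (HM : M <> 0) by (unfold M; lia).
  assert (Hdm : forall n, exists q r, r < M /\ n = M * q + r).
  { intros n. exists (n / M), (n mod M). split. apply Nat.mod_upper_bound; auto. apply Nat.div_mod; auto. }
  assert (Hu : forall n q r, r < M -> n = M * q + r -> u n = nth r (p q) (c 0)).
  { intros n q r H1 H2. destruct (dm M n q r H1 H2) as [E1 E2]. unfold u. rewrite E1, E2. reflexivity. }
  exists u. split; [|split; [|split]].
  - intros n. destruct (Hdm n) as [q [r [H1 H2]]]. rewrite (Hu n q r H1 H2).
    destruct (Hp q) as [Hw Hl].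
    destruct (Nat.eq_dec (S r) M) as [Heq|Hne].
    + rewrite (Hu (S n) (S q) 0) by lia. left.
      rewrite (wk_nth0 _ _ _ _ _ (proj1 (Hp (S q)))).
      replace r with (length (p q) - 1) by lia. apply (wk_nth_last _ _ _ _ _ Hw).
    + rewrite (Hu (S n) q (S r)) by lia. apply (wk_nth_step _ _ _ _ _ Hw). lia.
  - intros v. destruct (ball_fin Gm Hf K v) as [L HL]. destruct (fto_list c Hc L) as [N HN].
    exists (M * N). intros n Hn. destruct (Hdm n) as [q [r [H1 H2]]].
    assert (Hq : q < N).
    { apply HN, HL. destruct (Hp q) as [Hw Hl]. rewrite (Hu n q r H1 H2) in Hn.
      assert (Hin : In v (p q)) by (rewrite <- Hn; apply nth_In; lia).
      destruct (wk_prefix _ _ _ _ _ Hw Hin) as [l' [H3 H4]]. exists l'; split; auto. unfold M in *; lia. }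
    assert (M * (q + 1) <= M * N) by (apply Nat.mul_le_mono_l; lia). lia.
  - intros i. exists (M * i). rewrite (Hu (M * i) i 0) by lia. apply (wk_nth0 _ _ _ _ _ (proj1 (Hp i))).
  - intros n. destruct (Hdm n) as [q [r [H1 H2]]]. exists q. rewrite (Hu n q r H1 H2).
    destruct (Hp q) as [Hw Hl].
    assert (Hin : In (nth r (p q) (c 0)) (p q)) by (apply nth_In; lia).
    split.
    + destruct (wk_prefix _ _ _ _ _ Hw Hin) as [l' [H3 H4]]. exists l'; split; auto. unfold M in *; lia.
    + destruct (wk_suffix _ _ _ _ _ Hw Hin) as [l' [H3 H4]]. exists l'; split; auto. unfold M in *; lia.
Qed.

Fixpoint titer (f : nat -> nat) (k : nat) : nat :=
  match k with 0 => f 0 | S k => f (S (titer f k)) end.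

Lemma max_exists (P : nat -> Prop) N n :
  P n -> (forall m, P m -> m < N) -> exists m, P m /\ forall m', P m' -> m' <= m.
Proof.
  revert n; induction N; intros n Hn HN. specialize (HN _ Hn); lia.
  destruct (classic (P N)) as [HP|HP].
  - exists N. split; auto. intros m' Hm'. specialize (HN _ Hm'); lia.
  - apply (IHN n Hn). intros m Hm. specialize (HN _ Hm).
    destruct (Nat.eq_dec m N); subst; [contradiction|lia].
Qed.

Lemma loop_erase {V} (Gm : digraph V) w : swalk Gm w -> fto w ->
  exists s, is_ray Gm s /\ forall n, exists i, s n = w i.
Proof.
  intros Hs Hf.
  assert (Hl : forall n, exists m, w m = w n /\ n <= m /\ forall m', w m' = w n -> m' <= m).
  { intros n. destruct (Hf (w n)) as [N HN].
    destruct (max_exists (fun m => w m = w n) N n eq_refl HN) as [m [H1 H2]].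
    exists m. repeat split; auto. }
  apply fchoice in Hl. destruct Hl as [lv Hlv].
  pose (t := titer lv).
  assert (Hw : forall k, exists m, t k = lv m) by (intros [|k]; eexists; reflexivity).
  assert (Hlast : forall k m', w m' = w (t k) -> m' <= t k).
  { intros k m' E. destruct (Hw k) as [m Hm]. rewrite Hm in *. destruct (Hlv m) as [H1 [_ H3]].
    apply H3. congruence. }
  assert (Hinc : forall k, t k < t (S k)).
  { intros k. change (t (S k)) with (lv (S (t k))). destruct (Hlv (S (t k))) as [_ [H _]]. lia. }
  assert (Hmono : forall j k, j < k -> t j < t k).
  { intros j k H; induction H. apply Hinc. pose proof (Hinc m); lia. }
  exists (fun k => w (t k)). split; [split|].
  - intros i j E. destruct (Nat.lt_total i j) as [H|[H|H]]; auto.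
    + pose proof (Hlast i _ (eq_sym E)). pose proof (Hmono _ _ H). lia.
    + pose proof (Hlast j _ E). pose proof (Hmono _ _ H). lia.
  - intros k. change (Gm (w (t k)) (w (lv (S (t k))))). rewrite (proj1 (Hlv (S (t k)))).
    destruct (Hs (t k)) as [E|E]; auto. exfalso. pose proof (Hlast k _ (eq_sym E)). lia.
  - intros n. exists (t n); auto.
Qed.

Lemma build {Va Vb} (Ga : digraph Va) (Gb : digraph Vb) (h : Va -> Vb) K (c : nat -> Va) :
  indeg_fin Gb -> (forall y, exists L, forall x, h x = y -> In x L) ->
  (forall x y, Ga x y -> reach Gb K (h x) (h y)) ->
  fto c -> (forall i, step Ga (c i) (c (S i))) ->
  exists u, swalk Gb u /\ fto u /\ (forall i, exists n, u n = h (c i)) /\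
    (forall n, exists i, reach Gb K (h (c i)) (u n) /\ reach Gb K (u n) (h (c (S i)))).
Proof.
  intros Hf Hfib He Hc Hs. apply (flatten Gb K (fun i => h (c i))); auto.
  - intros v. destruct (Hfib v) as [L HL]. destruct (fto_list c Hc L) as [N HN].
    exists N. intros n E. apply HN, HL; auto.
  - intros i. destruct (Hs i) as [E|E]. rewrite E; apply reach_refl. apply He; auto.
Qed.

Definition Good {V1 V2} (G1 : digraph V1) (G2 : digraph V2) (phi : V1 -> V2) (psi : V2 -> V1)
  (r : nat -> V1) (s : nat -> V2) (W : nat -> V2) (U : nat -> V1) : Prop :=
  ray_or_antiray G2 s /\
  (swalk G2 W \/ swalk (rev_g G2) W) /\ fto W /\
  (forall i, exists n, W n = phi (r i)) /\
  (forall n, exists i, s n = W i) /\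
  (swalk G1 U \/ swalk (rev_g G1) U) /\ fto U /\
  (forall n, exists i, U i = psi (W n)).

Lemma rr_inj {V} (Gm : digraph V) r : ray_or_antiray Gm r -> forall i j, r i = r j -> i = j.
Proof. intros [[H _]|[H _]]; auto. Qed.

Lemma generic_main {V1 V2} (G1 : digraph V1) (G2 : digraph V2) (phi : V1 -> V2) (psi : V2 -> V1) K :
  indeg_fin G1 -> indeg_fin (rev_g G1) -> indeg_fin G2 -> indeg_fin (rev_g G2) ->
  (forall y, exists L, forall x, phi x = y -> In x L) ->
  (forall y, phi (psi y) = y) ->
  (forall x y, G1 x y -> reach G2 K (phi x) (phi y)) ->
  (forall x y, G2 x y -> reach G1 K (psi x) (psi y)) ->
  (forall x, reach G1 K x (psi (phi x)) /\ reach G1 K (psi (phi x)) x) ->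
  same_number_of_ends G1 G2.
Proof.
  intros Hi1 Hi1r Hi2 Hi2r Hfib Hpp He1 He2 Hcl.
  assert (Hpsif : forall y, exists L, forall x, psi x = y -> In x L).
  { intros y. exists [phi y]. intros x E. left. rewrite <- E, Hpp. auto. }
  assert (He1r : forall x y, rev_g G1 x y -> reach (rev_g G2) K (phi x) (phi y)).
  { intros x y H. apply reach_rev, He1, H. }
  assert (He2r : forall x y, rev_g G2 x y -> reach (rev_g G1) K (psi x) (psi y)).
  { intros x y H. apply reach_rev, He2, H. }
  assert (Hpsi_inj : forall x y, psi x = psi y -> x = y).
  { intros x y E. rewrite <- (Hpp x), <- (Hpp y), E. auto. }
  assert (Hex : forall r, ray_or_antiray G1 r -> exists s W U, Good G1 G2 phi psi r s W U).
  { intros r Hr. pose proof (inj_fto r (rr_inj _ _ Hr)) as Hfr.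
    destruct Hr as [[Hinj Hray]|[Hinj Hray]].
    - destruct (build G1 G2 phi K r Hi2 Hfib He1 Hfr (fun i => or_intror (Hray i)))
        as [W [HW [HfW [HWr _]]]].
      destruct (loop_erase G2 W HW HfW) as [s [Hs HsW]].
      destruct (build G2 G1 psi K W Hi1 Hpsif He2 HfW HW) as [U [HU [HfU [HUW _]]]].
      exists s, W, U. repeat split; auto;
      try (left; assumption); try (right; assumption);
      try (intros n; destruct (HUW n) as [i Hi]; eauto).
    - destruct (build (rev_g G1) (rev_g G2) phi K r Hi2r Hfib He1r Hfr (fun i => or_intror (Hray i)))
        as [W [HW [HfW [HWr _]]]].
      destruct (loop_erase (rev_g G2) W HW HfW) as [s [Hs HsW]].
      destruct (build (rev_g G2) (rev_g G1) psi K W Hi1r Hpsif He2r HfW HW) as [U [HU [HfU [HUW _]]]].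
      exists s, W, U. repeat split; auto;
      try (left; assumption); try (right; assumption);
      try (intros n; destruct (HUW n) as [i Hi]; eauto).
      }
  assert (Ha : forall r s W U r' s' W' U', Good G1 G2 phi psi r s W U -> Good G1 G2 phi psi r' s' W' U' ->
     ray_or_antiray G1 r -> ray_or_antiray G1 r' ->
     preceq G1 (range r) (range r') -> preceq G2 (range s) (range s')).
  { intros r s W U r' s' W' U' [Hs [HW [HfW [HWr [HsW _]]]]] [Hs' [HW' [HfW' [HWr' [HsW' _]]]]] Hr Hr' H.
    pose proof (transport G1 G2 phi K _ _ Hi2 Hfib He1 H) as H1.
    assert (H2 : preceq G2 (range W) (range W')).
    { revert H1; apply prec_mono.
      - intros v [x [[i <-] <-]]. destruct (HWr i) as [n Hn]. exists n; auto.
      - intros v [x [[i <-] <-]]. destruct (HWr' i) as [n Hn]. exists n; auto. }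
    assert (H3 : preceq G2 (range s) (range W)).
    { apply (inf_int _ _ _ s (rr_inj _ _ Hs)). intros n. split. exists n; auto.
      destruct (HsW n) as [i Hi]. exists i; auto. }
    assert (H4 : preceq G2 (range W') (range s')).
    { apply (inf_int _ _ _ s' (rr_inj _ _ Hs')). intros n. split.
      destruct (HsW' n) as [i Hi]. exists i; auto. exists n; auto. }
    apply (trans_gen G2 W' _ _ HW' HfW'); auto.
    apply (trans_gen G2 W _ _ HW HfW); auto. }
  assert (Hb : forall r s W U r' s' W' U', Good G1 G2 phi psi r s W U -> Good G1 G2 phi psi r' s' W' U' ->
     ray_or_antiray G1 r -> ray_or_antiray G1 r' ->
     preceq G2 (range s) (range s') -> preceq G1 (range r) (range r')).
  { intros r s W U r' s' W' U' [Hs [HW [HfW [HWr [HsW [HU [HfU HUW]]]]]]]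
      [Hs' [HW' [HfW' [HWr' [HsW' [HU' [HfU' HUW']]]]]]] Hr Hr' H.
    pose proof (transport G2 G1 psi K _ _ Hi1 Hpsif He2 H) as H1.
    assert (H2 : preceq G1 (range U) (range U')).
    { revert H1; apply prec_mono.
      - intros v [x [[n <-] <-]]. destruct (HsW n) as [i Hi]. destruct (HUW i) as [j Hj].
        exists j. rewrite Hj, Hi; auto.
      - intros v [x [[n <-] <-]]. destruct (HsW' n) as [i Hi]. destruct (HUW' i) as [j Hj].
        exists j. rewrite Hj, Hi; auto. }
    assert (H3 : preceq G1 (range r) (range U)).
    { apply (close_prec G1 K r); auto. apply inj_fto, (rr_inj _ _ Hr).
      intros n. split. exists n; auto. exists (psi (phi (r n))). split; [|apply Hcl].
      destruct (HWr n) as [i Hi]. destruct (HUW i) as [j Hj]. exists j. rewrite Hj, Hi; auto. }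
    assert (H4 : preceq G1 (range U') (range r')).
    { apply (close_prec G1 K (fun n => psi (phi (r' n)))); auto.
      - intros v. destruct (Hfib (phi v)) as [L HL].
        destruct (fto_list r' (inj_fto r' (rr_inj _ _ Hr')) L) as [N HN].
        exists N. intros n E. apply HN, HL. rewrite <- E, Hpp; auto.
      - intros n. split.
        + destruct (HWr' n) as [i Hi]. destruct (HUW' i) as [j Hj]. exists j. rewrite Hj, Hi; auto.
        + exists (r' n). split. exists n; auto. apply Hcl. }
    apply (trans_gen G1 U' _ _ HU' HfU'); auto.
    apply (trans_gen G1 U _ _ HU HfU); auto. }
  assert (Hsur : forall s0, ray_or_antiray G2 s0 -> exists r Vv, ray_or_antiray G1 r /\
     (swalk G1 Vv \/ swalk (rev_g G1) Vv) /\ fto Vv /\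
     (forall i, exists n, Vv n = psi (s0 i)) /\
     (forall n, exists j, reach G1 K (Vv n) (psi (s0 j))) /\
     (forall n, exists i, r n = Vv i)).
  { intros s0 Hs0. pose proof (inj_fto s0 (rr_inj _ _ Hs0)) as Hf0.
    destruct Hs0 as [[Hinj Hray]|[Hinj Hray]].
    - destruct (build G2 G1 psi K s0 Hi1 Hpsif He2 Hf0 (fun i => or_intror (Hray i)))
        as [Vv [HV [HfV [HVs Hcl2]]]].
      destruct (loop_erase G1 Vv HV HfV) as [r [Hr HrV]].
      exists r, Vv. repeat split; auto; try (left; assumption); try (right; assumption);
      try (intros n; destruct (Hcl2 n) as [i [_ H]]; eauto).
    - destruct (build (rev_g G2) (rev_g G1) psi K s0 Hi1r Hpsif He2r Hf0 (fun i => or_intror (Hray i)))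
        as [Vv [HV [HfV [HVs Hcl2]]]].
      destruct (loop_erase (rev_g G1) Vv HV HfV) as [r [Hr HrV]].
      exists r, Vv. repeat split; auto; try (left; assumption); try (right; assumption);
      try (intros n; destruct (Hcl2 n) as [i [H _]]; exists i; apply reach_rev in H; exact H). }
  assert (Hf : forall r, exists s, ray_or_antiray G1 r -> exists W U, Good G1 G2 phi psi r s W U).
  { intros r. destruct (classic (ray_or_antiray G1 r)) as [Hr|Hr].
    - destruct (Hex r Hr) as [s [W [U HG]]]. exists s. intros _. eauto.
    - exists (fun n => phi (r n)). intros H; contradiction. }
  apply fchoice in Hf. destruct Hf as [f Hf].
  exists f. split; [|split].
  - intros r Hr. destruct (Hf r Hr) as [W [U HG]]. apply HG.
  - intros r s Hr Hs'. destruct (Hf r Hr) as [W [U HG]]. destruct (Hf s Hs') as [W' [U' HG']].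
    unfold end_equiv. split; intros [H1 H2]; split.
    + eapply (Ha r _ W U s _ W' U'); eauto.
    + eapply (Ha s _ W' U' r _ W U); eauto.
    + eapply (Hb r _ W U s _ W' U'); eauto.
    + eapply (Hb s _ W' U' r _ W U); eauto.
  - intros s0 Hs0. destruct (Hsur s0 Hs0) as [r [Vv [Hr [HV [HfV [HVs [HVc HrV]]]]]]].
    exists r. split; auto. set (s := f r).
    destruct (Hf r Hr) as [W [U [Hs [HW [HfW [HWr [HsW _]]]]]]].
    assert (P1 : preceq G1 (range r) (range Vv)).
    { apply (inf_int _ _ _ r (rr_inj _ _ Hr)). intros n. split. exists n; auto.
      destruct (HrV n) as [i Hi]. exists i; auto. }
    assert (P1' : preceq G1 (range Vv) (range r)).
    { apply (inf_int _ _ _ r (rr_inj _ _ Hr)). intros n. split.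
      destruct (HrV n) as [i Hi]. exists i; auto. exists n; auto. }
    assert (P2 : preceq G1 (range Vv) (img psi (range s0))).
    { apply (close_prec G1 K Vv); auto. intros n. split. exists n; auto.
      destruct (HVc n) as [j Hj]. exists (psi (s0 j)). split; auto. exists (s0 j). split; auto. exists j; auto. }
    assert (P2' : preceq G1 (img psi (range s0)) (range Vv)).
    { apply (inf_int _ _ _ (fun n => psi (s0 n))).
      intros i j E. apply (rr_inj _ _ Hs0), Hpsi_inj, E.
      intros n. split. exists (s0 n). split; auto. exists n; auto.
      destruct (HVs n) as [i Hi]. exists i; auto. }
    assert (Q1 : preceq G2 (range s) (range W)).
    { apply (inf_int _ _ _ s (rr_inj _ _ Hs)). intros n. split. exists n; auto.
      destruct (HsW n) as [i Hi]. exists i; auto. }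
    assert (Q1' : preceq G2 (range W) (range s)).
    { apply (inf_int _ _ _ s (rr_inj _ _ Hs)). intros n. split.
      destruct (HsW n) as [i Hi]. exists i; auto. exists n; auto. }
    assert (HimW : forall v, img phi (range r) v -> range W v).
    { intros v [x [[i <-] <-]]. destruct (HWr i) as [n Hn]. exists n; auto. }
    assert (Hims : forall v, img phi (img psi (range s0)) v -> range s0 v).
    { intros v [x [[y [[i <-] <-]] <-]]. rewrite Hpp. exists i; auto. }
    split.
    + pose proof (trans_gen G1 Vv _ _ HV HfV P1 P2) as T1.
      pose proof (transport G1 G2 phi K _ _ Hi2 Hfib He1 T1) as T2.
      apply (prec_mono _ _ (range W) _ (range s0) HimW Hims) in T2.
      apply (trans_gen G2 W _ _ HW HfW); auto.
    + pose proof (trans_gen G1 Vv _ _ HV HfV P2' P1') as T1.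
      pose proof (transport G1 G2 phi K _ _ Hi2 Hfib He1 T1) as T2.
      apply (prec_mono _ _ (range s0) _ (range W) Hims HimW) in T2.
      apply (trans_gen G2 W _ _ HW HfW); auto.
Qed.

Lemma fold_walk {T0} (mul : T0 -> T0 -> T0) (A : list T0) l : Forall (fun b => In b A) l ->
  forall y, exists lw, wk (right_cayley mul A) y (fold_left mul l y) lw /\ length lw = S (length l).
Proof.
  induction 1 as [|b l Hb Hl IH]; intros y. exists [y]; split; [constructor|reflexivity].
  simpl. destruct (IH (mul y b)) as [lw [Hw Hlen]]. exists (y :: lw). split.
  econstructor; [right; exists b; split; auto | exact Hw]. simpl; lia.
Qed.

Lemma fold_assoc {T0} (mul : T0 -> T0 -> T0) : (forall x y z, mul (mul x y) z = mul x (mul y z)) ->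
  forall l x a, mul x (fold_left mul l a) = fold_left mul l (mul x a).
Proof. intros H l; induction l as [|b l IH]; intros x a; simpl. reflexivity. rewrite IH, H. reflexivity. Qed.

Lemma words_bounded {T0} (mul : T0 -> T0 -> T0) (A : list T0) :
  (forall x y z, mul (mul x y) z = mul x (mul y z)) -> sgp_generates mul A ->
  forall T : list T0, exists K, forall t x, In t T -> reach (right_cayley mul A) K x (mul x t).
Proof.
  intros Has HA T. induction T as [|t T IH]. exists 0; intros t x [].
  destruct IH as [K HK]. destruct (HA t) as [a [l [Ha [Hl Ht]]]].
  exists (S (length l) + K). intros t' x [<-|Ht'].
  - destruct (fold_walk mul A l Hl (mul x a)) as [lw [Hw Hlen]].
    exists (x :: lw). split. rewrite Ht, fold_assoc by auto. econstructor; [right; exists a; split; auto | exact Hw].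
    simpl; lia.
  - apply (reach_mono _ K); auto; lia.
Qed.

Theorem mainTheorem10 (G E : Type) (mul : G -> G -> G) (one : G) (inv : G -> G)
  (mulE : E -> E -> E)
  (HG : is_group mul one inv)
  (HGfg : exists B : list G, sgp_generates mul B)
  (HEfin : exists l : list E, forall e, In e l)
  (HEne : inhabited E)
  (HErz : right_zero mulE)
  (A : list (G * E)) (HA : sgp_generates (prod_mul mul mulE) A)
  (B : list G) (HB : sgp_generates mul B) :
  same_number_of_ends (right_cayley (prod_mul mul mulE) A) (right_cayley mul B).
Proof.
  destruct HEfin as [lE HlE]. destruct HEne as [e0].
  destruct HG as [Hass [Hl1 [Hr1 [Hlinv Hrinv]]]].
  assert (Hpass : forall x y z, prod_mul mul mulE (prod_mul mul mulE x y) z = prod_mul mul mulE x (prod_mul mul mulE y z)).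
  { intros x y z. unfold prod_mul; simpl. rewrite Hass, !HErz. reflexivity. }
  destruct (words_bounded mul B Hass HB (map fst A)) as [K1 HK1].
  destruct (words_bounded _ A Hpass HA (map (fun b => (b, e0)) B ++ (one, e0) :: map (fun e => (one, e)) lE)) as [K2 HK2].
  apply (generic_main _ _ fst (fun g => (g, e0)) (K1 + K2)).
  - intros y. exists (flat_map (fun a => map (fun e => (mul (fst y) (inv (fst a)), e)) lE) A).
    intros x [a [Ha ->]]. apply in_flat_map. exists a. split; auto. apply in_map_iff. exists (snd x). split; auto.
    destruct x as [g e]. unfold prod_mul; simpl. f_equal. rewrite Hass, Hrinv, Hr1. reflexivity.
  - intros y. exists (map (prod_mul mul mulE y) A). intros x [a [Ha ->]]. apply in_map; auto.
  - intros y. exists (map (fun b => mul y (inv b)) B). intros x [a [Ha ->]]. apply in_map_iff.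
    exists a. split; auto. rewrite Hass, Hrinv, Hr1; auto.
  - intros y. exists (map (mul y) B). intros x [a [Ha ->]]. apply in_map; auto.
  - intros y. exists (map (fun e => (y, e)) lE). intros [g e] <-. apply in_map_iff. exists e; auto.
  - intros y; reflexivity.
  - intros x y [a [Ha ->]]. apply (reach_mono _ K1); [|lia]. apply HK1. apply in_map; auto.
  - intros x y [b [Hb ->]]. apply (reach_mono _ K2); [|lia].
    replace (mul x b, e0) with (prod_mul mul mulE (x, e0) (b, e0)) by (unfold prod_mul; simpl; rewrite HErz; auto).
    apply HK2. apply in_or_app; left; apply in_map_iff. exists b; auto.
  - intros [g e]. simpl. split; apply (reach_mono _ K2); try lia.
    + replace (g, e0) with (prod_mul mul mulE (g, e) (one, e0)) by (unfold prod_mul; simpl; rewrite Hr1, HErz; auto).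
      apply HK2. apply in_or_app; right; left; auto.
    + assert (Hin : In (one, e) (map (fun b => (b, e0)) B ++ (one, e0) :: map (fun e => (one, e)) lE)).
      { apply in_or_app; right; right. apply in_map; auto. }
      pose proof (HK2 _ (g, e0) Hin) as H. unfold prod_mul in H; simpl in H. rewrite Hr1, HErz in H. exact H.
Qed.
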